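(* Let $R\subset S$ be a finite Gilmer extension which is seminormal and infra-integral. Then $R\subset S$ is unramified and has FIP.
   Context: Rings are commutative with identity. $(R:S)=\{r\in R\mid rS\subseteq R\}$; Gilmer extension: $R/(R:S)$ Artinian. Seminormal: $b\in S$, $b^2,b^3\in R$ imply $b\in R$. Infra-integral: integral and all residual field extensions $\kappa(Q\cap R)\to\kappa(Q)$ are isomorphisms. Unramified: of finite type with $\Omega(S|R)=0$. FIP: finitely many $R$-subalgebras. *)

(* Defs.v *)
From HB Require Import structures.
From mathcomp Require Import all_boot all_order all_algebra.
Set Implicit Arguments. Unset Strict Implicit. Unset Printing Implicit Defensive.
Import GRing.Theory.
Local Open Scope ring_scope.

(* A ring extension R ⊆ S is encoded as a commutative ring S together with a
   subset R : S -> Prop which is a subring (contains 0,1, closed under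
   subtraction and multiplication). *)
Section Ext.
Variable S : comNzRingType.
Implicit Types (R T I J Q : S -> Prop).

Definition subset_of (A B : S -> Prop) := forall x, A x -> B x.
Definition same_set (A B : S -> Prop) := forall x, A x <-> B x.

Definition is_subring R : Prop :=
  [/\ R 0, R 1, (forall x y, R x -> R y -> R (x - y))
    & (forall x y, R x -> R y -> R (x * y))].

Definition finite_ext R : Prop :=
  exists xs : seq S, forall s : S, exists cs : seq S,
    [/\ size cs = size xs, (forall i, R cs`_i)
      & s = \sum_(i < size xs) cs`_i * xs`_i].

Definition finite_type_ext R : Prop :=
  exists xs : seq S, forall s : S, forall P : S -> Prop,
    subset_of R P -> (forall x, x \in xs -> P x) ->
    (forall x y, P x -> P y -> P (x + y)) ->
    (forall x y, P x -> P y -> P (x * y)) -> P s.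

Definition conductor R : S -> Prop := fun r => R r /\ forall s : S, R (r * s).

Definition ideal_of R J : Prop :=
  [/\ subset_of J R, J 0, (forall x y, J x -> J y -> J (x + y))
    & (forall r x, R r -> J x -> J (r * x))].

(* R/I is Artinian: ideals of R/I correspond to ideals of R containing I;
   every descending chain of such ideals stabilizes. *)
Definition artinian_quotient R I : Prop :=
  forall J : nat -> (S -> Prop),
    (forall n, ideal_of R (J n)) -> (forall n, subset_of I (J n)) ->
    (forall n, subset_of (J n.+1) (J n)) ->
    exists N, forall n, (N <= n)%N -> same_set (J n) (J N).

Definition gilmer_ext R : Prop := artinian_quotient R (conductor R).

Definition seminormal_ext R : Prop :=
  forall b : S, R (b ^+ 2) -> R (b ^+ 3) -> R b.

Definition ideal_S Q : Prop :=
  [/\ Q 0, (forall x y, Q x -> Q y -> Q (x + y)) & (forall r x, Q x -> Q (r * x))].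
Definition prime_ideal Q : Prop :=
  [/\ ideal_S Q, ~ Q 1 & (forall a b, Q (a * b) -> Q a \/ Q b)].

Definition integral_ext R : Prop :=
  forall s : S, exists p : {poly S},
    [/\ p \is monic, (forall i, R p`_i) & root p s].

(* The residual extension κ(Q ∩ R) -> κ(Q), with κ(P) = Frac(A/P), sends
   c/d to c/d; it is always an injective field morphism, and it is an
   isomorphism iff every a/b (a,b in S, b ∉ Q) equals some c/d (c,d in R,
   d ∉ Q) in Frac(S/Q), i.e. a*d - b*c ∈ Q. *)
Definition residual_iso R Q : Prop :=
  forall a b : S, ~ Q b ->
    exists c d : S, [/\ R c, R d, ~ Q d & Q (a * d - b * c)].

Definition infra_integral_ext R : Prop :=
  integral_ext R /\ forall Q, prime_ideal Q -> residual_iso R Q.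

(* Kähler differentials Ω(S|R) = F/N, where F is the free S-module on symbols
   [x] (x in S), whose elements we represent by finite formal sums
   (seq of (coefficient, symbol)), and N is the S-submodule generated by
   [a+b]-[a]-[b], [ab]-a[b]-b[a], and [r] (r in R). *)
Definition fcoef (l : seq (S * S)) (t : S) : S :=
  \sum_(p <- l) (if p.2 == t then p.1 else 0).

Definition kahler_rel R (l : seq (S * S)) : Prop :=
  (exists a b : S, l = [:: (1, a + b); (-1, a); (-1, b)]) \/
  (exists a b : S, l = [:: (1, a * b); (- a, b); (- b, a)]) \/
  (exists r : S, R r /\ l = [:: (1, r)]).

Definition in_kahler_relations R (l : seq (S * S)) : Prop :=
  exists gs : seq (S * seq (S * S)),
    (forall k, (k < size gs)%N -> kahler_rel R (nth (0, [::]) gs k).2) /\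
    forall t : S, fcoef l t = \sum_(cg <- gs) cg.1 * fcoef cg.2 t.

(* Ω(S|R) = 0 iff every generator [s] lies in N. *)
Definition kahler_zero R : Prop :=
  forall s : S, in_kahler_relations R [:: (1, s)].

Definition unramified_ext R : Prop := finite_type_ext R /\ kahler_zero R.

Definition subalgebra R T : Prop := is_subring T /\ subset_of R T.

Definition fip_ext R : Prop :=
  exists l : seq (S -> Prop), forall T, subalgebra R T ->
    exists2 k, (k < size l)%N & same_set T (nth (fun _ => False) l k).

End Ext.

(* Main.v *)
Require Import Defs.
From mathcomp Require Import all_boot all_order all_algebra ring zify.
From Stdlib Require Import Classical ClassicalEpsilon.
Set Implicit Arguments. Unset Strict Implicit. Unset Printing Implicit Defensive.
Import GRing.Theory.
Local Open Scope ring_scope.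

Lemma in_tl (T : eqType) (a : T) (l : seq T) x : x \in l -> x \in a :: l.
Proof. by rewrite inE => ->; rewrite orbT. Qed.

Section Main.
Variable S : comNzRingType.
Variable R : S -> Prop.
Hypothesis HR : is_subring R.

Lemma R0 : R 0. Proof. by case: HR. Qed.
Lemma R1 : R 1. Proof. by case: HR. Qed.
Lemma RB x y : R x -> R y -> R (x - y). Proof. by case: HR => _ _ H _; apply: H. Qed.
Lemma RM x y : R x -> R y -> R (x * y). Proof. by case: HR => _ _ _ H; apply: H. Qed.
Lemma RN x : R x -> R (- x).
Proof. move=> Hx; rewrite -sub0r; apply: RB => //; exact: R0. Qed.
Lemma RD x y : R x -> R y -> R (x + y).
Proof. move=> Hx Hy; rewrite -[y]opprK; apply: RB => //; exact: RN. Qed.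

Definition C := conductor R.

Lemma C_R x : C x -> R x. Proof. by case. Qed.
Lemma C0 : C 0. Proof. split; first exact: R0. by move=> s; rewrite mul0r; exact: R0. Qed.
Lemma CMl x y : C x -> C (y * x).
Proof.
case=> Hx H; split; first by rewrite mulrC; apply: H.
by move=> s; rewrite (mulrC y) -mulrA; apply: H.
Qed.
Lemma CMr x y : C x -> C (x * y).
Proof. by rewrite mulrC; apply: CMl. Qed.
Lemma CB x y : C x -> C y -> C (x - y).
Proof.
case=> Hx H1 [Hy H2]; split; first exact: RB.
by move=> s; rewrite mulrBl; apply: RB.
Qed.
Lemma CN x : C x -> C (- x).
Proof. by move=> Hx; rewrite -sub0r; apply: CB => //; exact: C0. Qed.
Lemma CD x y : C x -> C y -> C (x + y).
Proof. by move=> Hx Hy; rewrite -[y]opprK; apply: CB => //; exact: CN. Qed.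
Lemma Ceq x y : x = y -> C x -> C y. Proof. by move->. Qed.

Lemma Csum (I : eqType) (l : seq I) (g : I -> S) :
  (forall i, i \in l -> C (g i)) -> C (\sum_(i <- l) g i).
Proof.
elim: l => [|a l IH] H; first by rewrite big_nil; exact: C0.
rewrite big_cons; apply: CD; first by apply: H; rewrite inE eqxx.
by apply: IH => i Hi; apply: H; rewrite inE Hi orbT.
Qed.



Definition Nm (f : S -> S) :=
  exists gs : seq (S * seq (S * S)),
    (forall k, (k < size gs)%N -> kahler_rel R (nth (0, [::]) gs k).2) /\
    forall t, f t = \sum_(cg <- gs) cg.1 * fcoef cg.2 t.

Lemma Nm_ext f g : (forall t, f t = g t) -> Nm f -> Nm g.
Proof. by move=> E [gs [H1 H2]]; exists gs; split => // t; rewrite -E. Qed.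

Lemma Nm_add f g : Nm f -> Nm g -> Nm (fun t => f t + g t).
Proof.
move=> [gs1 [H1 H2]] [gs2 [H3 H4]]; exists (gs1 ++ gs2); split.
  move=> k; rewrite size_cat nth_cat => Hk; case: ifP => Hk1; first exact: H1.
  by apply: H3; rewrite ltn_subLR // leqNgt Hk1.
by move=> t; rewrite big_cat H2 H4.
Qed.

Lemma Nm_scale a f : Nm f -> Nm (fun t => a * f t).
Proof.
move=> [gs [H1 H2]]; exists [seq (a * cg.1, cg.2) | cg <- gs]; split.
  move=> k; rewrite size_map => Hk; rewrite (nth_map (0, [::])) //; exact: H1.
by move=> t; rewrite big_map H2 mulr_sumr; apply: eq_bigr => cg _ /=; rewrite mulrA.
Qed.

Lemma Nm_rel l : kahler_rel R l -> Nm (fcoef l).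
Proof.
move=> H; exists [:: (1, l)]; split.
  by move=> k; rewrite ltnS leqn0 => /eqP ->.
by move=> t; rewrite big_seq1 mul1r.
Qed.

Definition D (s : S) : S -> S := fcoef [:: (1, s)].

Lemma DA a b : Nm (fun t => D (a + b) t - D a t - D b t).
Proof.
apply: (Nm_ext _ (Nm_rel (or_introl (ex_intro _ a (ex_intro _ b erefl))))) => t.
rewrite /D /fcoef !big_cons !big_nil /=.
by case: (a + b == t); case: (a == t); case: (b == t) => /=; ring.
Qed.

Lemma DM a b : Nm (fun t => D (a * b) t - a * D b t - b * D a t).
Proof.
apply: (Nm_ext _ (Nm_rel (or_intror (or_introl (ex_intro _ a (ex_intro _ b erefl)))))) => t.
rewrite /D /fcoef !big_cons !big_nil /=.
by case: (a * b == t); case: (a == t); case: (b == t) => /=; ring.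
Qed.

Lemma DR r : R r -> Nm (D r).
Proof. by move=> Hr; apply: Nm_rel; right; right; exists r. Qed.

Hypothesis Hsn : seminormal_ext R.

Lemma C_sq x : C (x ^+ 2) -> C x.
Proof.
case=> Hx2 H.
have K : forall s, R (x * s).
  move=> s; apply: Hsn.
    by rewrite exprMn; apply: H.
  have -> : (x * s) ^+ 3 = x ^+ 2 * (x * s ^+ 3) by ring.
  exact: H.
by split => //; rewrite -[x]mulr1; apply: K.
Qed.

Lemma C_pow n x : C (x ^+ n) -> C x.
Proof.
elim: n {-2}n (leqnn n) x => [|n IH] m Hm x Hx.
  move: Hm; rewrite leqn0 => /eqP Em; move: Hx; rewrite Em expr0 => H1.
  by rewrite -[x]mulr1; apply: CMl.
case: m Hm Hx => [|m] Hm Hx.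
  by rewrite -[x]mulr1; apply: CMl; rewrite expr0 in Hx.
case: m Hm Hx => [|m] Hm Hx; first by rewrite expr1 in Hx.
apply: (IH m.+1) => //.
apply: C_sq; rewrite -exprM.
have -> : (m.+1 * 2 = m.+2 + m)%N by lia.
by rewrite exprD; apply: CMr.
Qed.


Definition submod (N : S -> Prop) :=
  [/\ forall c, C c -> N c, forall x y, N x -> N y -> N (x + y)
    & forall r x, R r -> N x -> N (r * x)].

Fixpoint M (xs : seq S) (k : nat) : S -> Prop :=
  match k with
  | 0 => C
  | k'.+1 => fun x => exists r y, [/\ R r, M xs k' y & x = r * xs`_k' + y]
  end.

Lemma M_sub xs k : submod (M xs k).
Proof.
elim: k => [|k [IH1 IH2 IH3]] /=.
  split; [by [] | by move=> x y; apply: CD | by move=> r x _; apply: CMl].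
split.
- move=> c Hc; exists 0, c; split; [exact: R0 | exact: IH1 | by rewrite mul0r add0r].
- move=> x y [r1 [y1 [H1 H2 ->]]] [r2 [y2 [H3 H4 ->]]].
  exists (r1 + r2), (y1 + y2); split; [exact: RD | exact: IH2 | ring].
- move=> r x Hr [r1 [y1 [H1 H2 ->]]].
  exists (r * r1), (r * y1); split; [exact: RM | exact: IH3 | ring].
Qed.

Lemma chain_sub (Nn : nat -> S -> Prop) :
  (forall n, subset_of (Nn n.+1) (Nn n)) ->
  forall m n, (m <= n)%N -> subset_of (Nn n) (Nn m).
Proof.
move=> H m; elim=> [|n IH] Hmn.
  by move: Hmn; rewrite leqn0 => /eqP ->.
move: Hmn; rewrite leq_eqVlt => /orP [/eqP -> //|Hmn].
by move=> x Hx; apply: IH => //; apply: H.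
Qed.

Hypothesis Hgil : gilmer_ext R.

Lemma dccM xs k : forall Nn : nat -> S -> Prop,
  (forall n, submod (Nn n)) -> (forall n, subset_of (Nn n) (M xs k)) ->
  (forall n, subset_of (Nn n.+1) (Nn n)) ->
  exists N, forall n, (N <= n)%N -> subset_of (Nn N) (Nn n).
Proof.
elim: k => [|k IH] Nn Hsub HM Hdesc.
  exists 0%N => n _ x Hx; case: (Hsub n) => H1 _ _; apply: H1; exact: HM Hx.
pose pi n := fun r => R r /\ exists y, M xs k y /\ Nn n (r * xs`_k + y).
have [Mk1 Mk2 Mk3] := M_sub xs k.
have Hpi : forall n, ideal_of R (pi n).
  move=> n; case: (Hsub n) => N1 N2 N3; split.
  - by move=> x [].
  - split; first exact: R0.
    exists 0; split; first by apply: Mk1; exact: C0.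
    by rewrite mul0r addr0; apply: N1; exact: C0.
  - move=> x y [Hx [y1 [Hy1 Hn1]]] [Hy [y2 [Hy2 Hn2]]]; split; first exact: RD.
    exists (y1 + y2); split; first exact: Mk2.
    have -> : (x + y) * xs`_k + (y1 + y2) = (x * xs`_k + y1) + (y * xs`_k + y2) by ring.
    exact: N2.
  - move=> r x Hr [Hx [y1 [Hy1 Hn1]]]; split; first exact: RM.
    exists (r * y1); split; first exact: Mk3.
    have -> : r * x * xs`_k + r * y1 = r * (x * xs`_k + y1) by ring.
    exact: N3.
have HpiC : forall n, subset_of (conductor R) (pi n).
  move=> n c Hc; split; first exact: C_R.
  exists 0; split; first by apply: Mk1; exact: C0.
  case: (Hsub n) => N1 _ _; rewrite addr0; apply: N1; exact: CMr.
have Hpid : forall n, subset_of (pi n.+1) (pi n).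
  move=> n r [Hr [y [Hy Hn]]]; split => //; exists y; split => //; exact: Hdesc.
have [N1 HN1] := Hgil Hpi HpiC Hpid.
pose I n := fun x => Nn n x /\ M xs k x.
have HI : forall n, submod (I n).
  move=> n; case: (Hsub n) => N1' N2 N3; split.
  - by move=> c Hc; split; [exact: N1' | exact: Mk1].
  - by move=> x y [? ?] [? ?]; split; [exact: N2 | exact: Mk2].
  - by move=> r x Hr [? ?]; split; [exact: N3 | exact: Mk3].
have [N2 HN2] := IH I HI (fun n x H => H.2) (fun n x H => conj (Hdesc n x H.1) H.2).
exists (maxn N1 N2) => n Hn x Hx.
have [r [y [Hr Hy Ex]]] := HM _ x Hx.
have HpiN : pi (maxn N1 N2) r by split => //; exists y; split => //; rewrite -Ex.
have Hpin : pi n r.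
  apply: (proj2 (HN1 n (leq_trans (leq_maxl _ _) Hn) r)).
  exact: (proj1 (HN1 _ (leq_maxl _ _) r) HpiN).
case: Hpin => _ [y' [Hy' Hn']].
have Hsubn := chain_sub Hdesc.
have HI1 : I (maxn N1 N2) (y - y').
  split; last by apply: Mk2 => //; rewrite -mulN1r; apply: Mk3 => //; apply: RN; exact: R1.
  have -> : y - y' = x + (-1) * (r * xs`_k + y') by rewrite Ex; ring.
  case: (Hsub (maxn N1 N2)) => _ N2' N3'; apply: N2' => //; apply: N3'; first by apply: RN; exact: R1.
  exact: (Hsubn _ _ Hn).
have HI2 : I n (y - y').
  apply: (HN2 n (leq_trans (leq_maxr _ _) Hn)).
  exact: (@chain_sub I (fun n x H => conj (Hdesc n x H.1) H.2) N2 (maxn N1 N2) (leq_maxr N1 N2) _ HI1).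
have -> : x = (y - y') + (r * xs`_k + y') by rewrite Ex; ring.
by case: (Hsub n) => _ N2' _; apply: N2' => //; case: HI2.
Qed.


Hypothesis Hfin : finite_ext R.

Lemma dcc (Nn : nat -> S -> Prop) :
  (forall n, submod (Nn n)) -> (forall n, subset_of (Nn n.+1) (Nn n)) ->
  exists N, forall n, (N <= n)%N -> subset_of (Nn N) (Nn n).
Proof.
case: Hfin => xs Hxs Hsub Hdesc.
apply: (dccM (k := size xs)) => // n x _.
have [cs [_ Hcs ->]] := Hxs x.
elim: (size xs) => [|k IH]; first by rewrite big_ord0; exact: C0.
rewrite big_ord_recr /=; exists cs`_k, (\sum_(i < k) cs`_i * xs`_i).
by split => //; rewrite addrC.
Qed.

Section SubP.
Variable P : S -> Prop.
Hypothesis HP : is_subring P.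
Lemma P0 : P 0. Proof. by case: HP. Qed.
Lemma P1 : P 1. Proof. by case: HP. Qed.
Lemma PB x y : P x -> P y -> P (x - y). Proof. by case: HP => _ _ H _; apply: H. Qed.
Lemma PM x y : P x -> P y -> P (x * y). Proof. by case: HP => _ _ _ H; apply: H. Qed.
Lemma PN x : P x -> P (- x).
Proof. move=> Hx; rewrite -sub0r; apply: PB => //; exact: P0. Qed.
Lemma PD x y : P x -> P y -> P (x + y).
Proof. move=> Hx Hy; rewrite -[y]opprK; apply: PB => //; exact: PN. Qed.
End SubP.

Lemma regular (T : S -> Prop) : is_subring T -> subset_of R T ->
  forall u, T u -> exists y, T y /\ C (u - u ^+ 2 * y).
Proof.
move=> HT HRT u Hu.
pose Nn n := fun x => exists t c, [/\ T t, C c & x = u ^+ n * t + c].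
have Hsub : forall n, submod (Nn n).
  move=> n; split.
  - move=> c Hc; exists 0, c; split => //; [exact: P0 | by rewrite mulr0 add0r].
  - move=> x y [t1 [c1 [H1 H2 ->]]] [t2 [c2 [H3 H4 ->]]].
    exists (t1 + t2), (c1 + c2); split; [exact: PD | exact: CD | ring].
  - move=> r x Hr [t1 [c1 [H1 H2 ->]]].
    exists (r * t1), (r * c1); split; [apply: PM => //; exact: HRT | exact: CMl | ring].
have Hdesc : forall n, subset_of (Nn n.+1) (Nn n).
  move=> n x [t [c [Ht Hc ->]]]; exists (u * t), c; split => //; first exact: PM.
  by rewrite exprS; ring.
have [N HN] := dcc Hsub Hdesc.
have : Nn N (u ^+ N) by exists 1, 0; split; [exact: P1 | exact: C0 | ring].
move/(HN N.+1 (leqnSn N)) => [t [c [Ht Hc Ec]]].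
exists t; split => //.
have H1 : C ((u * (1 - u * t)) ^+ N.+1).
  have -> : (u * (1 - u * t)) ^+ N.+1 = (u ^+ N * (1 - u * t)) * (u * (1 - u * t) ^+ N).
    by rewrite exprMn exprS exprSr; ring.
  apply: CMr.
  have -> : u ^+ N * (1 - u * t) = u ^+ N - u ^+ N.+1 * t by rewrite exprS; ring.
  by rewrite {1}Ec; apply: (Ceq _ Hc); ring.
by apply: (Ceq _ (C_pow H1)); ring.
Qed.


Lemma Cby x y : C x -> x = y -> C y. Proof. by move=> H <-. Qed.

Definition idem e := C (e * e - e).
Definition le f e := C (f - f * e).
Definition prim e := [/\ idem e, ~ C e &
  forall f, idem f -> le f e -> C f \/ C (f - e)].
Definition NN x := fun z => exists s c, C c /\ z = x * s + c.
Definition lt y x := subset_of (NN y) (NN x) /\ ~ NN y x.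

Lemma NN_sub x : submod (NN x).
Proof.
split.
- by move=> c Hc; exists 0, c; split => //; ring.
- move=> a b [s1 [c1 [H1 ->]]] [s2 [c2 [H2 ->]]]; exists (s1 + s2), (c1 + c2).
  by split; [exact: CD | ring].
- move=> r a _ [s1 [c1 [H1 ->]]]; exists (r * s1), (r * c1).
  by split; [exact: CMl | ring].
Qed.

Lemma NN_self x : NN x x.
Proof. by exists 1, 0; split; [exact: C0 | ring]. Qed.

Lemma lt_wf : well_founded lt.
Proof.
move=> x0; apply: NNPP => H0.
have step : forall z, ~ Acc lt z -> exists y, lt y z /\ ~ Acc lt y.
  move=> z Hz; apply: NNPP => Hn; apply: Hz; constructor => y Hy.
  by apply: NNPP => Hy'; apply: Hn; exists y.
pose F (p : {z | ~ Acc lt z}) : {z | ~ Acc lt z} :=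
  let (y, Hy) := constructive_indefinite_description _ (step _ (proj2_sig p)) in
  exist _ y (proj2 Hy).
have HF : forall p, lt (proj1_sig (F p)) (proj1_sig p).
  by move=> p; rewrite /F; case: constructive_indefinite_description => y [H1 H2].
pose sq n := proj1_sig (iter n F (exist _ x0 H0)).
have Hlt : forall n, lt (sq n.+1) (sq n) by move=> n; rewrite /sq iterS; apply: HF.
have [N HN] := dcc (Nn := fun n => NN (sq n)) (fun n => NN_sub _) (fun n => (Hlt n).1).
by apply: (Hlt N).2; apply: (HN N.+1 (leqnSn N)); exact: NN_self.
Qed.

Lemma decomp e : idem e ->
  exists es : seq S, (forall x, x \in es -> prim x) /\ C (e - \sum_(x <- es) x).
Proof.
elim: (lt_wf e) => {}e _ IH He.
case: (classic (C e)) => HCe.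
  by exists [::]; split => //; rewrite big_nil subr0.
case: (classic (prim e)) => Hpe.
  exists [:: e]; split; first by move=> x; rewrite inE => /eqP ->.
  by rewrite big_seq1 subrr; exact: C0.
have [f [Hf Hfe Hf0 Hfe2]] : exists f, [/\ idem f, le f e, ~ C f & ~ C (f - e)].
  apply: NNPP => Hn; apply: Hpe; split => // f Hf Hfe.
  apply: NNPP => Hor; apply: Hn; exists f; split => // H; apply: Hor; [left|right] => //.
have Hg : idem (e - f * e).
  apply: (Cby (CD (CMr (1 - 2%:R * f + f * f) He) (CMr (e) Hf))).
  ring.
have Hlf : lt f e.
  split.
    move=> z [s [c [Hc ->]]]; exists (f * s), ((f - f * e) * s + c).
    by split; [exact: CD (CMr s Hfe) Hc | ring].
  move=> [s [c [Hc Ee]]]; apply: Hfe2.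
  have : C ((f * s + c) - f * (f * s + c)).
    by apply: (Cby (CD (CMr (- s) Hf) (CB Hc (CMl (f) Hc)))); ring.
  rewrite -Ee => H; apply: (Cby (CB Hfe H)); ring.
have Hlg : lt (e - f * e) e.
  split.
    move=> z [s [c [Hc ->]]]; exists ((1 - f) * s), c.
    by split => //; ring.
  move=> [s [c [Hc Ee]]]; apply: Hf0.
  have : C (f * ((e - f * e) * s + c)).
    by apply: (Cby (CD (CMr (- e * s) Hf) (CMl (f) Hc))); ring.
  rewrite -Ee => H; apply: (Cby (CD Hfe H)); ring.
have [es1 [H1 H1']] := IH _ Hlf Hf.
have [es2 [H2 H2']] := IH _ Hlg Hg.
exists (es1 ++ es2); split.
  by move=> x; rewrite mem_cat => /orP [] ?; [apply: H1 | apply: H2].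
rewrite big_cat /=; apply: (Cby (CB (CD H1' H2') Hfe)); ring.
Qed.


Lemma idemM a b : idem a -> idem b -> idem (a * b).
Proof.
move=> Ha Hb; apply: (Cby (CD (CMr (b * b) Ha) (CMl a Hb))); ring.
Qed.

Lemma idem1m a : idem a -> idem (1 - a).
Proof. by move=> Ha; apply: (Cby Ha); ring. Qed.

Lemma idem_one : idem 1.
Proof. by apply: (Cby C0); rewrite mulr1 subrr. Qed.

Lemma trueP : is_subring (fun _ : S => True). Proof. by split. Qed.

Hypothesis Hii : infra_integral_ext R.

Lemma prim_val e : prim e -> forall a, exists r, R r /\ C (e * a - e * r).
Proof.
case=> He HCe Hp a.
pose Q := fun z => C (e * z).
have HQ1 : ~ Q 1 by rewrite /Q mulr1.
have HQ : prime_ideal Q.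
  split => //.
  - split.
    + by apply: (Cby C0); ring.
    + by move=> x y H1 H2; apply: (Cby (CD H1 H2)); ring.
    + by move=> r x H; apply: (Cby (CMl r H)); ring.
  - move=> x y Hxy; case: (classic (Q x)) => Hx; [by left | right].
    have [z [_ Hz]] := regular (u := e * x) trueP (fun _ _ => I) I.
    have Hgi : idem (e * x * z).
      by apply: (Cby (CMr z (CN Hz))); ring.
    have Hgl : le (e * x * z) e.
      by apply: (Cby (CMl (- (x * z)) He)); ring.
    case: (Hp _ Hgi Hgl) => Hg.
      by exfalso; apply: Hx; apply: (Cby (CD Hz (CMl (e * x) Hg))); ring.
    rewrite /Q; apply: (Cby (CD (CMr (- y) Hg) (CMl z Hxy))); ring.
case: Hii => _ Hres.
have [c [d [Hc Hd Hnd Hq]]] := Hres Q HQ a 1 HQ1.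
have [w [Hw Hw']] := regular HR (fun x H => H) Hd.
have Hk : idem (1 - d * w) by apply: idem1m; apply: (Cby (CMr (- w) Hw')); ring.
have Hi : idem (e * (1 - d * w)) by exact: idemM.
have Hl : le (e * (1 - d * w)) e by apply: (Cby (CMl (- (1 - d * w)) He)); ring.
case: (Hp _ Hi Hl) => H.
  exists (c * w); split; first exact: RM.
  by apply: (Cby (CD (CMl a H) (CMl w Hq))); ring.
exfalso; apply: Hnd; rewrite /Q.
by apply: (Cby (CD (CMl e Hw') (CMr (- d) H))); ring.
Qed.


Lemma decK (l : seq S) : (forall e, e \in l -> prim e) -> forall x,
  exists ps : seq (S * S), (forall p, p \in ps -> R p.1 /\ idem p.2) /\
    C (x * \sum_(e <- l) e - \sum_(p <- ps) p.1 * p.2).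
Proof.
elim: l => [|e l IH] Hl x.
  by exists [::]; split => //; rewrite !big_nil; apply: (Cby C0); ring.
have Hpe : prim e by apply: Hl; rewrite inE eqxx.
have [r [Hr Hex]] := prim_val Hpe x.
have [ps [Hps Hc]] := IH (fun e' H => Hl e' (in_tl _ H)) x.
exists ((r, e) :: ps); split.
  move=> p; rewrite inE => /orP [/eqP -> /=|]; last exact: Hps.
  by split => //; case: Hpe.
rewrite !big_cons /=; apply: (Cby (CD Hex Hc)); ring.
Qed.

Section Tsec.
Variable T : S -> Prop.
Hypothesis HT : is_subring T.
Hypothesis HRT : subset_of R T.
Variable x : S.
Hypothesis Hx : T x.

Lemma trip (l : seq S) : (forall e, e \in l -> prim e) ->
  exists tr : seq (S * S),
    (forall p, p \in tr -> [/\ R p.1, T p.2, idem p.2 & C (x * p.2 - p.1 * p.2)]) /\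
    forall e, e \in l -> C (e * \prod_(p <- tr) (1 - p.2)).
Proof.
elim: l => [|e l IH] Hl.
  by exists [::]; split.
have Hpe : prim e by apply: Hl; rewrite inE eqxx.
have [r [Hr Hex]] := prim_val Hpe x.
have [tr [Htr HP]] := IH (fun e' H => Hl e' (in_tl _ H)).
have Hu : T (x - r) by apply: PB => //; exact: HRT.
have [y [Ty Hy]] := regular HT HRT Hu.
exists ((r, 1 - (x - r) * y) :: tr); split.
  move=> p; rewrite inE => /orP [/eqP -> /=|]; last exact: Htr.
  split => //.
  - by apply: PB => //; [exact: P1 | exact: PM].
  - by apply: idem1m; apply: (Cby (CMr (- y) Hy)); ring.
  - by apply: (Cby Hy); ring.
move=> e'; rewrite inE big_cons /= => /orP [/eqP ->|He'].
  by apply: (Cby (CMr (y * \prod_(p <- tr) (1 - p.2)) Hex)); ring.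
by apply: (Cby (CMl ((x - r) * y) (HP _ He'))); ring.
Qed.

Lemma comb (tr : seq (S * S)) : forall w, T w -> idem w ->
  (forall p, p \in tr -> [/\ R p.1, T p.2, idem p.2 & C (x * p.2 - p.1 * p.2)]) ->
  exists hs : seq (S * S), (forall p, p \in hs -> [/\ R p.1, T p.2 & idem p.2]) /\
    C (x * w - \sum_(p <- hs) p.1 * p.2 - x * w * \prod_(p <- tr) (1 - p.2)).
Proof.
elim: tr => [|[r f] tr IH] w Hw Hiw Htr.
  by exists [::]; split => //; rewrite big_nil big_nil; apply: (Cby C0); ring.
have [Hr Hf Hif Hxf] : [/\ R r, T f, idem f & C (x * f - r * f)].
  exact: (Htr (r, f) (mem_head _ _)).
have Tw' : T (w * (1 - f)) by apply: PM => //; apply: PB => //; exact: P1.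
have Iw' : idem (w * (1 - f)) by apply: idemM => //; exact: idem1m.
have [hs [Hhs Hc]] := IH _ Tw' Iw' (fun p H => Htr p (in_tl _ H)).
exists ((r, w * f) :: hs); split.
  move=> p; rewrite inE => /orP [/eqP -> /=|]; last exact: Hhs.
  by split => //; [exact: PM | exact: idemM].
rewrite !big_cons /=; apply: (Cby (CD (CMl w Hxf) Hc)); ring.
Qed.

End Tsec.

Section Es.
Variable es : seq S.
Hypothesis Hes : forall e, e \in es -> prim e.
Hypothesis Hes1 : C (1 - \sum_(e <- es) e).

Lemma fipdec T x : is_subring T -> subset_of R T -> T x ->
  exists hs : seq (S * S), (forall p, p \in hs -> [/\ R p.1, T p.2 & idem p.2]) /\
    C (x - \sum_(p <- hs) p.1 * p.2).
Proof.
move=> HT HRT Hx.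
have [tr [Htr HP]] := trip HT HRT Hx Hes.
have [hs [Hhs Hc]] := comb HT (P1 HT) idem_one Htr.
exists hs; split => //.
have HPi : C (\prod_(p <- tr) (1 - p.2)).
  apply: (Cby (CD (CMr (\prod_(p <- tr) (1 - p.2)) Hes1) (Csum HP))).
  by rewrite -mulr_suml; ring.
by apply: (Cby (CD Hc (CMl x HPi))); ring.
Qed.

Lemma kdec x : exists ps : seq (S * S), (forall p, p \in ps -> R p.1 /\ idem p.2) /\
    C (x - \sum_(p <- ps) p.1 * p.2).
Proof.
have [ps [Hps Hc]] := decK Hes x.
exists ps; split => //; apply: (Cby (CD (CMl x Hes1) Hc)); ring.
Qed.

Fixpoint subs (l : seq S) : seq S :=
  if l is e :: l' then subs l' ++ [seq e + y | y <- subs l'] else [:: 0].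

Lemma subs_aux f (l : seq S) : (forall e, e \in l -> C (f * e) \/ C (f * e - e)) ->
  exists y, y \in subs l /\ C (\sum_(e <- l) f * e - y).
Proof.
elim: l => [|e l IH] Hl.
  by exists 0; split; [rewrite inE | rewrite big_nil subrr; exact: C0].
have [y [Hy Hc]] := IH (fun e' H => Hl e' (in_tl _ H)).
rewrite big_cons /=.
case: (Hl e (mem_head _ _)) => He.
  exists y; split; first by rewrite mem_cat Hy.
  by apply: (Cby (CD He Hc)); ring.
exists (e + y); split; first by rewrite mem_cat; apply/orP; right; apply: map_f.
by apply: (Cby (CD He Hc)); ring.
Qed.

Lemma classif f : idem f -> exists j, (j < size (subs es))%N /\ C (f - (subs es)`_j).
Proof.
move=> Hf.
have [y [Hy Hc]] : exists y, y \in subs es /\ C (\sum_(e <- es) f * e - y).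
  apply: subs_aux => e He; case: (Hes He) => Hie _ Hp; apply: Hp.
  - exact: idemM.
  - by apply: (Cby (CMl (- f) Hie)); ring.
exists (index y (subs es)); split; first by rewrite index_mem.
rewrite nth_index //.
apply: (Cby (CD (CMl f Hes1) Hc)); rewrite -mulr_sumr; ring.
Qed.

End Es.

Lemma Cann c y : C c -> Nm (fun t => c * D y t).
Proof.
move=> Hc.
have Hcy : R (c * y) by apply: C_R; exact: CMr.
have := Nm_add (Nm_add (DR Hcy) (Nm_scale (-1) (DM c y))) (Nm_scale (-1) (Nm_scale y (DR (C_R Hc)))).
by apply: Nm_ext => t; ring.
Qed.

Lemma Didem e : idem e -> Nm (D e).
Proof.
move=> Hc.
have h1 := DM e e.
have h2 := DA e (e * e - e).
have E : e + (e * e - e) = e * e by ring.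
rewrite E in h2.
have h3 := DR (C_R Hc).
have k : Nm (fun t => (2%:R * e - 1) * D e t).
  have := Nm_add (Nm_add (Nm_scale (-1) h1) h2) h3.
  by apply: Nm_ext => t; ring.
have := Nm_add (Nm_scale (2%:R * e - 1) k) (Nm_scale (- 4%:R) (Cann e Hc)).
by apply: Nm_ext => t; ring.
Qed.

Lemma Dsum (ps : seq (S * S)) : (forall p, p \in ps -> R p.1 /\ idem p.2) ->
  Nm (D (\sum_(p <- ps) p.1 * p.2)).
Proof.
elim: ps => [|[r e] ps IH] H.
  by rewrite big_nil; apply: DR; exact: R0.
rewrite big_cons /=.
have [Hr He] : R r /\ idem e by exact: (H (r, e) (mem_head _ _)).
have hs := IH (fun p Hp => H p (in_tl _ Hp)).
have hre : Nm (D (r * e)).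
  have := Nm_add (Nm_add (DM r e) (Nm_scale r (Didem He))) (Nm_scale e (DR Hr)).
  by apply: Nm_ext => t; ring.
have := Nm_add (Nm_add (DA (r * e) (\sum_(p <- ps) p.1 * p.2)) hre) hs.
by apply: Nm_ext => t; ring.
Qed.

Lemma ftype : finite_type_ext R.
Proof.
case: Hfin => xs Hxs; exists xs => s P HRP Hxsp Hadd Hmul.
have [cs [_ Hcs ->]] := Hxs s.
apply: big_ind => //; first by apply: HRP; exact: R0.
move=> i _; apply: Hmul; first by apply: HRP.
by apply: Hxsp; apply: mem_nth.
Qed.

Fixpoint allmasks (n : nat) : seq (seq bool) :=
  if n is n'.+1 then [seq b :: m | b <- [:: true; false], m <- allmasks n']
  else [:: [::]].

Lemma mask_ex n (Pp : nat -> Prop) :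
  exists2 m, m \in allmasks n & forall i, (i < n)%N -> (nth false m i <-> Pp i).
Proof.
elim: n Pp => [|n IH] Pp; first by exists [::] => //; rewrite inE.
have [m Hm Hmi] := IH (fun i => Pp i.+1).
case: (classic (Pp 0)) => H0.
  exists (true :: m); first by apply: (allpairs_f (fun b m => b :: m)); rewrite ?inE.
  by case=> [|i] Hi /=; [split | apply: Hmi].
exists (false :: m); first by apply: (allpairs_f (fun b m => b :: m)); rewrite ?inE.
by case=> [|i] Hi /=; [split => // /H0 | apply: Hmi].
Qed.

Definition Tm (L : seq S) (m : seq bool) := fun x =>
  exists ps : seq (S * S),
    (forall p, p \in ps -> R p.1 /\ exists j, [/\ (j < size L)%N, nth false m j & p.2 = L`_j]) /\
    C (x - \sum_(p <- ps) p.1 * p.2).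

Lemma final : unramified_ext R /\ fip_ext R.
Proof.
have [es [Hes Hes1]] := decomp idem_one.
split.
  split; first exact: ftype.
  move=> x.
  have [ps [Hps Hc]] := kdec Hes Hes1 x.
  have := Nm_add (Nm_add (DA (x - \sum_(p <- ps) p.1 * p.2) (\sum_(p <- ps) p.1 * p.2))
            (DR (C_R Hc))) (Dsum Hps).
  have E : x - \sum_(p <- ps) p.1 * p.2 + \sum_(p <- ps) p.1 * p.2 = x by ring.
  rewrite E => H; change (Nm (D x)); apply: (Nm_ext _ H) => t; ring.
pose L := subs es.
exists [seq Tm L m | m <- allmasks (size L)] => T [HT HRT].
have [m Hm Hmk] := mask_ex (size L) (fun j => T L`_j).
exists (index m (allmasks (size L))); first by rewrite size_map index_mem.
rewrite (nth_map [::]) ?index_mem // nth_index // => x; split.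
  move=> Hx.
  have [hs [Hhs Hc]] := fipdec Hes Hes1 HT HRT Hx.
  have [ps [Hps Hc2]] : exists ps : seq (S * S),
      (forall p, p \in ps -> R p.1 /\ exists j, [/\ (j < size L)%N, nth false m j & p.2 = L`_j]) /\
      C (\sum_(p <- hs) p.1 * p.2 - \sum_(p <- ps) p.1 * p.2).
    elim: hs Hhs {Hc} => [|[r h] hs IH] Hhs.
      by exists [::]; split => //; rewrite !big_nil subrr; exact: C0.
    have [Hr Th Ih] : [/\ R r, T h & idem h] by exact: (Hhs (r, h) (mem_head _ _)).
    have [ps [Hps Hc2]] := IH (fun p Hp => Hhs p (in_tl _ Hp)).
    have [j [Hj Hhj]] := classif Hes Hes1 Ih.
    exists ((r, L`_j) :: ps); split.
      move=> p; rewrite inE => /orP [/eqP -> /=|]; last exact: Hps.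
      split => //; exists j; split => //; apply/(Hmk j Hj).
      have -> : L`_j = h - (h - L`_j) by ring.
      by apply: PB => //; apply: HRT; exact: C_R.
    rewrite !big_cons /=; apply: (Cby (CD (CMl r Hhj) Hc2)); ring.
  exists ps; split => //; apply: (Cby (CD Hc Hc2)); ring.
move=> [ps [Hps Hc]].
have HS : T (\sum_(p <- ps) p.1 * p.2).
  elim: ps Hps {Hc} => [|p ps IH] Hps; first by rewrite big_nil; exact: P0.
  rewrite big_cons; apply: PD => //; last by apply: IH => q Hq; apply: Hps; exact: in_tl.
  have [Hp1 [j [Hj Hmj ->]]] := Hps p (mem_head _ _).
  by apply: PM => //; [exact: HRT | exact/(Hmk j Hj)].
have -> : x = \sum_(p <- ps) p.1 * p.2 - (\sum_(p <- ps) p.1 * p.2 - x) by ring.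
apply: PB => //; apply: HRT; apply: C_R; apply: (Cby (CN Hc)); ring.
Qed.

End Main.

Theorem proposition5p3 (S : comNzRingType) (R : S -> Prop) :
  is_subring R ->
  finite_ext R -> gilmer_ext R -> seminormal_ext R -> infra_integral_ext R ->
  unramified_ext R /\ fip_ext R.
Proof.
move=> HR Hfin Hgil Hsn Hii.
exact: (final HR Hsn Hgil Hfin Hii).
Qed.
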